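(* In the game $\mathrm{CN}(7,4)$, if $\mathbf p\notin S$ and exactly one stack of $\mathbf p$ has height $0$, then there is a legal move from $\mathbf p$ to some $\mathbf p'\in S$. Here, writing a position as $(a,b,c,d,e,f,g)$ with $a$ a minimum entry, $S_1=\{a=b=0,\ c=g>0,\ d+e+f=c\}$, $S_2=\{a=b=c=d=e=f=g\}$, $S_3=\{a=b,\ c=g,\ d=f,\ a+c=d+e,\ 0<a<e\}$, $S_4=\{a=f,\ b+c=d+e=g+a,\ a<\min\{b,e\},\ a<\max\{c,d\}\}$, and $S=S_1\cup S_2\cup S_3\cup S_4$.
   Context: Circular Nim $\mathrm{CN}(7,4)$: $7$ stacks of tokens are arranged in a circle; a position is a vector $(p_1,\dots,p_7)$ of nonnegative integers giving the stack heights in order around the circle, determined only up to rotation and reflection. A legal move consists of choosing $4$ cyclically consecutive stacks and removing at least one token from at least one of these $4$ stacks (any number from each chosen stack; other stacks unchanged). A position belongs to $S_i$ if some rotation and/or reflection $(a,b,c,d,e,f,g)$ of it with $a$ equal to the minimum entry satisfies the conditions defining $S_i$. *)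

(* Defs.v *)
From mathcomp Require Import all_boot.
Set Implicit Arguments. Unset Strict Implicit. Unset Printing Implicit Defensive.

(* A position of CN(7,4): stack heights indexed by 'I_7, in cyclic order. *)
Definition pos := 'I_7 -> nat.

Definition idx (n : nat) : 'I_7 := inord (n %% 7).

Definition dsym (k : nat) (r : bool) (p : pos) : pos :=
  fun i => p (idx (if r then k + 7 - i else k + i)).

Definition S1c (a b c d e f g : nat) : Prop :=
  a = 0 /\ b = 0 /\ c = g /\ 0 < c /\ d + e + f = c.
Definition S2c (a b c d e f g : nat) : Prop :=
  a = b /\ b = c /\ c = d /\ d = e /\ e = f /\ f = g.
Definition S3c (a b c d e f g : nat) : Prop :=
  a = b /\ c = g /\ d = f /\ a + c = d + e /\ 0 < a /\ a < e.
Definition S4c (a b c d e f g : nat) : Prop :=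
  a = f /\ b + c = d + e /\ d + e = g + a /\ a < minn b e /\ a < maxn c d.

(* Membership in S_i: some rotation/reflection (a,...,g) with a the minimum
   entry satisfies the condition. *)
Definition inSi (C : nat -> nat -> nat -> nat -> nat -> nat -> nat -> Prop)
  (p : pos) : Prop :=
  exists (k : nat) (r : bool),
    let q := dsym k r p in
    (forall i : 'I_7, q (idx 0) <= q i) /\
    C (q (idx 0)) (q (idx 1)) (q (idx 2)) (q (idx 3)) (q (idx 4))
      (q (idx 5)) (q (idx 6)).

Definition inS (p : pos) : Prop :=
  inSi S1c p \/ inSi S2c p \/ inSi S3c p \/ inSi S4c p.

(* Legal move of CN(7,4): choose 4 cyclically consecutive stacks
   j, j+1, j+2, j+3 (mod 7), remove tokens only from those, at least one. *)
Definition legal_move (p p' : pos) : Prop :=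
  exists j : nat,
    (forall i : 'I_7, p' i <= p i) /\
    (forall i : 'I_7, (forall t, t < 4 -> i != idx (j + t)) -> p' i = p i) /\
    (exists i : 'I_7, p' i < p i).

(* Main.v *)
Require Import Defs.
From mathcomp Require Import all_boot.
From mathcomp Require Import zify.

Definition Good (p : pos) := exists p', legal_move p p' /\ inS p'.

Lemma idx_val n : (idx n : nat) = n %% 7.
Proof. by rewrite /idx inordK // ltn_mod. Qed.

Lemma idx_inj a b : a %% 7 = b %% 7 -> idx a = idx b.
Proof. by move=> h; apply: val_inj; rewrite /= !idx_val h. Qed.

Lemma ord_idx k (i : 'I_7) : i = idx (k + (i + 7 - k %% 7) %% 7).
Proof. apply: val_inj; rewrite /= idx_val. have := ltn_ord i. lia. Qed.

Lemma tmpl (p : pos) (k : nat) (y z : seq nat) (w c : nat) (r : bool)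
  (C : nat -> nat -> nat -> nat -> nat -> nat -> nat -> Prop) :
  w < 7 -> (forall q, inSi C q -> inS q) ->
  (forall m, m < 7 -> nth 0 y m <= p (idx (k+m))) ->
  (forall m, m < 7 -> 3 < (m + 7 - w) %% 7 -> nth 0 y m = p (idx (k+m))) ->
  (exists m, m < 7 /\ nth 0 y m < p (idx (k+m))) ->
  (forall n, n < 7 -> nth 0 z n = nth 0 y ((if r then c + 7 - n else c + n) %% 7)) ->
  nth 0 z 0 = 0 ->
  C (nth 0 z 0) (nth 0 z 1) (nth 0 z 2) (nth 0 z 3) (nth 0 z 4) (nth 0 z 5) (nth 0 z 6) ->
  Good p.
Proof.
move=> Hw HC Hle Hout [m0 [Hm0 Hlt]] Hz Hz0 HCz.
pose p' : pos := fun i => nth 0 y ((i + 7 - k %% 7) %% 7).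
have key : forall m, p' (idx (k + m)) = nth 0 y (m %% 7).
  by move=> m; rewrite /p' idx_val; congr nth; lia.
exists p'; split.
- have ex : forall i : 'I_7, exists2 m, m < 7 & i = idx (k + m).
    by move=> i; exists ((i + 7 - k %% 7) %% 7); [exact: ltn_pmod | exact: ord_idx].
  exists (k + w); split; [|split].
  + move=> i; have [m Hm ->] := ex i; rewrite key modn_small //; exact: Hle.
  + move=> i Hi; have [m Hm Hi'] := ex i; rewrite Hi' key modn_small //.
    apply: Hout => //.
    rewrite ltnNge; apply/negP => Ht.
    have := Hi ((m + 7 - w) %% 7) Ht.
    rewrite Hi'; move/eqP; apply.
    apply: idx_inj; lia.
  + exists (idx (k + m0)); rewrite key modn_small //.
- apply: HC; exists (k + c), r => /=.
  have Hq : forall n, n < 7 -> dsym (k + c) r p' (idx n) = nth 0 z n.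
    move=> n Hn; rewrite /dsym idx_val (modn_small Hn) Hz //.
    case: r {Hz HCz} => /=.
    * by rewrite -addnA -addnBA ?key //; lia.
    * by rewrite -addnA key.
  split.
  + move=> i; rewrite Hq // Hz0 //.
  + by rewrite !Hq.
Qed.

Lemma T_F2 (p : pos) (k x1 x2 x3 x4 x5 x6 : nat) :
  p (idx (k+0)) = 0 -> p (idx (k+1)) = x1 -> p (idx (k+2)) = x2 -> p (idx (k+3)) = x3 -> p (idx (k+4)) = x4 -> p (idx (k+5)) = x5 -> p (idx (k+6)) = x6 -> 0 < x1 -> 0 < x2 -> 0 < x3 -> 0 < x4 -> 0 < x5 -> 0 < x6 ->
  x1 <= x6 -> x6 <= x1 + x2 -> x6 <= x3 + x4 -> 2 <= x6 -> Good p.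
Proof.
move=> H0 H1 H2 H3 H4 H5 H6 P1 P2 P3 P4 P5 P6 C0 C1 C2 C3.
apply: (@tmpl p k [:: (0); (x1); (x6 - x1); (x6 - minn x4 (x6 - 1)); (minn x4 (x6 - 1)); (0); (x6)] [:: (0); (x1); (x6 - x1); (x6 - minn x4 (x6 - 1)); (minn x4 (x6 - 1)); (0); (x6)] 2 0 false S4c) => //.
- by move=> q hq; rewrite /inS; tauto.
- by move=> mm; do 7 (try case: mm => [|mm]); move=> /= Hm; rewrite ?H0 ?H1 ?H2 ?H3 ?H4 ?H5 ?H6; lia.
- by move=> mm; do 7 (try case: mm => [|mm]); move=> /= Hm Hw; rewrite ?H0 ?H1 ?H2 ?H3 ?H4 ?H5 ?H6; lia.
- by exists 5; split => //=; rewrite ?H0 ?H1 ?H2 ?H3 ?H4 ?H5 ?H6; lia.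
- by move=> nn; do 7 (try case: nn => [|nn]).
- by rewrite /= /S4c; lia.
Qed.

Lemma T_F2m (p : pos) (k x1 x2 x3 x4 x5 x6 : nat) :
  p (idx (k+0)) = 0 -> p (idx (k+1)) = x1 -> p (idx (k+2)) = x2 -> p (idx (k+3)) = x3 -> p (idx (k+4)) = x4 -> p (idx (k+5)) = x5 -> p (idx (k+6)) = x6 -> 0 < x1 -> 0 < x2 -> 0 < x3 -> 0 < x4 -> 0 < x5 -> 0 < x6 ->
  x6 <= x1 -> x1 <= x6 + x5 -> x1 <= x4 + x3 -> 2 <= x1 -> Good p.
Proof.
move=> H0 H1 H2 H3 H4 H5 H6 P1 P2 P3 P4 P5 P6 C0 C1 C2 C3.
apply: (@tmpl p k [:: (0); (x1); (0); (minn x3 (x1 - 1)); (x1 - minn x3 (x1 - 1)); (x1 - x6); (x6)] [:: (0); (x6); (x1 - x6); (x1 - minn x3 (x1 - 1)); (minn x3 (x1 - 1)); (0); (x1)] 2 0 true S4c) => //.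
- by move=> q hq; rewrite /inS; tauto.
- by move=> mm; do 7 (try case: mm => [|mm]); move=> /= Hm; rewrite ?H0 ?H1 ?H2 ?H3 ?H4 ?H5 ?H6; lia.
- by move=> mm; do 7 (try case: mm => [|mm]); move=> /= Hm Hw; rewrite ?H0 ?H1 ?H2 ?H3 ?H4 ?H5 ?H6; lia.
- by exists 2; split => //=; rewrite ?H0 ?H1 ?H2 ?H3 ?H4 ?H5 ?H6; lia.
- by move=> nn; do 7 (try case: nn => [|nn]).
- by rewrite /= /S4c; lia.
Qed.

Lemma T_A1a (p : pos) (k x1 x2 x3 x4 x5 x6 : nat) :
  p (idx (k+0)) = 0 -> p (idx (k+1)) = x1 -> p (idx (k+2)) = x2 -> p (idx (k+3)) = x3 -> p (idx (k+4)) = x4 -> p (idx (k+5)) = x5 -> p (idx (k+6)) = x6 -> 0 < x1 -> 0 < x2 -> 0 < x3 -> 0 < x4 -> 0 < x5 -> 0 < x6 ->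
  x5 <= x6 -> x6 <= x2 -> x6 <= x3 + x4 + x5 -> Good p.
Proof.
move=> H0 H1 H2 H3 H4 H5 H6 P1 P2 P3 P4 P5 P6 C0 C1 C2.
apply: (@tmpl p k [:: (0); (0); (x6); (minn (x6 - x5) x3); ((x6 - x5) - minn (x6 - x5) x3); (x5); (x6)] [:: (0); (0); (x6); (minn (x6 - x5) x3); ((x6 - x5) - minn (x6 - x5) x3); (x5); (x6)] 1 0 false S1c) => //.
- by move=> q hq; rewrite /inS; tauto.
- by move=> mm; do 7 (try case: mm => [|mm]); move=> /= Hm; rewrite ?H0 ?H1 ?H2 ?H3 ?H4 ?H5 ?H6; lia.
- by move=> mm; do 7 (try case: mm => [|mm]); move=> /= Hm Hw; rewrite ?H0 ?H1 ?H2 ?H3 ?H4 ?H5 ?H6; lia.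
- by exists 1; split => //=; rewrite ?H0 ?H1 ?H2 ?H3 ?H4 ?H5 ?H6; lia.
- by move=> nn; do 7 (try case: nn => [|nn]).
- by rewrite /= /S1c; lia.
Qed.

Lemma T_A1am (p : pos) (k x1 x2 x3 x4 x5 x6 : nat) :
  p (idx (k+0)) = 0 -> p (idx (k+1)) = x1 -> p (idx (k+2)) = x2 -> p (idx (k+3)) = x3 -> p (idx (k+4)) = x4 -> p (idx (k+5)) = x5 -> p (idx (k+6)) = x6 -> 0 < x1 -> 0 < x2 -> 0 < x3 -> 0 < x4 -> 0 < x5 -> 0 < x6 ->
  x2 <= x1 -> x1 <= x5 -> x1 <= x4 + x3 + x2 -> Good p.
Proof.
move=> H0 H1 H2 H3 H4 H5 H6 P1 P2 P3 P4 P5 P6 C0 C1 C2.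
apply: (@tmpl p k [:: (0); (x1); (x2); ((x1 - x2) - minn (x1 - x2) x4); (minn (x1 - x2) x4); (x1); (0)] [:: (0); (0); (x1); (minn (x1 - x2) x4); ((x1 - x2) - minn (x1 - x2) x4); (x2); (x1)] 3 0 true S1c) => //.
- by move=> q hq; rewrite /inS; tauto.
- by move=> mm; do 7 (try case: mm => [|mm]); move=> /= Hm; rewrite ?H0 ?H1 ?H2 ?H3 ?H4 ?H5 ?H6; lia.
- by move=> mm; do 7 (try case: mm => [|mm]); move=> /= Hm Hw; rewrite ?H0 ?H1 ?H2 ?H3 ?H4 ?H5 ?H6; lia.
- by exists 6; split => //=; rewrite ?H0 ?H1 ?H2 ?H3 ?H4 ?H5 ?H6; lia.
- by move=> nn; do 7 (try case: nn => [|nn]).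
- by rewrite /= /S1c; lia.
Qed.

Lemma T_A3 (p : pos) (k x1 x2 x3 x4 x5 x6 : nat) :
  p (idx (k+0)) = 0 -> p (idx (k+1)) = x1 -> p (idx (k+2)) = x2 -> p (idx (k+3)) = x3 -> p (idx (k+4)) = x4 -> p (idx (k+5)) = x5 -> p (idx (k+6)) = x6 -> 0 < x1 -> 0 < x2 -> 0 < x3 -> 0 < x4 -> 0 < x5 -> 0 < x6 ->
  x3 + x4 + x5 <= x2 -> x3 + x4 + x5 <= x6 -> Good p.
Proof.
move=> H0 H1 H2 H3 H4 H5 H6 P1 P2 P3 P4 P5 P6 C0 C1.
apply: (@tmpl p k [:: (0); (0); (x3 + x4 + x5); (x3); (x4); (x5); (x3 + x4 + x5)] [:: (0); (0); (x3 + x4 + x5); (x3); (x4); (x5); (x3 + x4 + x5)] 6 0 false S1c) => //.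
- by move=> q hq; rewrite /inS; tauto.
- by move=> mm; do 7 (try case: mm => [|mm]); move=> /= Hm; rewrite ?H0 ?H1 ?H2 ?H3 ?H4 ?H5 ?H6; lia.
- by move=> mm; do 7 (try case: mm => [|mm]); move=> /= Hm Hw; rewrite ?H0 ?H1 ?H2 ?H3 ?H4 ?H5 ?H6; lia.
- by exists 1; split => //=; rewrite ?H0 ?H1 ?H2 ?H3 ?H4 ?H5 ?H6; lia.
- by move=> nn; do 7 (try case: nn => [|nn]).
- by rewrite /= /S1c; lia.
Qed.

Lemma T_A3m (p : pos) (k x1 x2 x3 x4 x5 x6 : nat) :
  p (idx (k+0)) = 0 -> p (idx (k+1)) = x1 -> p (idx (k+2)) = x2 -> p (idx (k+3)) = x3 -> p (idx (k+4)) = x4 -> p (idx (k+5)) = x5 -> p (idx (k+6)) = x6 -> 0 < x1 -> 0 < x2 -> 0 < x3 -> 0 < x4 -> 0 < x5 -> 0 < x6 ->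
  x4 + x3 + x2 <= x5 -> x4 + x3 + x2 <= x1 -> Good p.
Proof.
move=> H0 H1 H2 H3 H4 H5 H6 P1 P2 P3 P4 P5 P6 C0 C1.
apply: (@tmpl p k [:: (0); (x4 + x3 + x2); (x2); (x3); (x4); (x4 + x3 + x2); (0)] [:: (0); (0); (x4 + x3 + x2); (x4); (x3); (x2); (x4 + x3 + x2)] 5 0 true S1c) => //.
- by move=> q hq; rewrite /inS; tauto.
- by move=> mm; do 7 (try case: mm => [|mm]); move=> /= Hm; rewrite ?H0 ?H1 ?H2 ?H3 ?H4 ?H5 ?H6; lia.
- by move=> mm; do 7 (try case: mm => [|mm]); move=> /= Hm Hw; rewrite ?H0 ?H1 ?H2 ?H3 ?H4 ?H5 ?H6; lia.
- by exists 6; split => //=; rewrite ?H0 ?H1 ?H2 ?H3 ?H4 ?H5 ?H6; lia.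
- by move=> nn; do 7 (try case: nn => [|nn]).
- by rewrite /= /S1c; lia.
Qed.

Lemma T_A2a (p : pos) (k x1 x2 x3 x4 x5 x6 : nat) :
  p (idx (k+0)) = 0 -> p (idx (k+1)) = x1 -> p (idx (k+2)) = x2 -> p (idx (k+3)) = x3 -> p (idx (k+4)) = x4 -> p (idx (k+5)) = x5 -> p (idx (k+6)) = x6 -> 0 < x1 -> 0 < x2 -> 0 < x3 -> 0 < x4 -> 0 < x5 -> 0 < x6 ->
  x3 + x4 <= x2 -> x2 <= x6 -> x2 <= x3 + x4 + x5 -> Good p.
Proof.
move=> H0 H1 H2 H3 H4 H5 H6 P1 P2 P3 P4 P5 P6 C0 C1 C2.
apply: (@tmpl p k [:: (0); (0); (x2); (x3); (x4); (x2 - (x3 + x4)); (x2)] [:: (0); (0); (x2); (x3); (x4); (x2 - (x3 + x4)); (x2)] 5 0 false S1c) => //.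
- by move=> q hq; rewrite /inS; tauto.
- by move=> mm; do 7 (try case: mm => [|mm]); move=> /= Hm; rewrite ?H0 ?H1 ?H2 ?H3 ?H4 ?H5 ?H6; lia.
- by move=> mm; do 7 (try case: mm => [|mm]); move=> /= Hm Hw; rewrite ?H0 ?H1 ?H2 ?H3 ?H4 ?H5 ?H6; lia.
- by exists 1; split => //=; rewrite ?H0 ?H1 ?H2 ?H3 ?H4 ?H5 ?H6; lia.
- by move=> nn; do 7 (try case: nn => [|nn]).
- by rewrite /= /S1c; lia.
Qed.

Lemma T_A2am (p : pos) (k x1 x2 x3 x4 x5 x6 : nat) :
  p (idx (k+0)) = 0 -> p (idx (k+1)) = x1 -> p (idx (k+2)) = x2 -> p (idx (k+3)) = x3 -> p (idx (k+4)) = x4 -> p (idx (k+5)) = x5 -> p (idx (k+6)) = x6 -> 0 < x1 -> 0 < x2 -> 0 < x3 -> 0 < x4 -> 0 < x5 -> 0 < x6 ->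
  x4 + x3 <= x5 -> x5 <= x1 -> x5 <= x4 + x3 + x2 -> Good p.
Proof.
move=> H0 H1 H2 H3 H4 H5 H6 P1 P2 P3 P4 P5 P6 C0 C1 C2.
apply: (@tmpl p k [:: (0); (x5); (x5 - (x4 + x3)); (x3); (x4); (x5); (0)] [:: (0); (0); (x5); (x4); (x3); (x5 - (x4 + x3)); (x5)] 6 0 true S1c) => //.
- by move=> q hq; rewrite /inS; tauto.
- by move=> mm; do 7 (try case: mm => [|mm]); move=> /= Hm; rewrite ?H0 ?H1 ?H2 ?H3 ?H4 ?H5 ?H6; lia.
- by move=> mm; do 7 (try case: mm => [|mm]); move=> /= Hm Hw; rewrite ?H0 ?H1 ?H2 ?H3 ?H4 ?H5 ?H6; lia.
- by exists 6; split => //=; rewrite ?H0 ?H1 ?H2 ?H3 ?H4 ?H5 ?H6; lia.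
- by move=> nn; do 7 (try case: nn => [|nn]).
- by rewrite /= /S1c; lia.
Qed.

Lemma T_G1 (p : pos) (k x1 x2 x3 x4 x5 x6 : nat) :
  p (idx (k+0)) = 0 -> p (idx (k+1)) = x1 -> p (idx (k+2)) = x2 -> p (idx (k+3)) = x3 -> p (idx (k+4)) = x4 -> p (idx (k+5)) = x5 -> p (idx (k+6)) = x6 -> 0 < x1 -> 0 < x2 -> 0 < x3 -> 0 < x4 -> 0 < x5 -> 0 < x6 ->
  x1 + x6 <= x2 -> x1 + x6 <= x5 -> Good p.
Proof.
move=> H0 H1 H2 H3 H4 H5 H6 P1 P2 P3 P4 P5 P6 C0 C1.
apply: (@tmpl p k [:: (0); (x1); (x1 + x6); (0); (0); (x1 + x6); (x6)] [:: (0); (0); (x1 + x6); (x6); (0); (x1); (x1 + x6)] 2 3 false S1c) => //.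
- by move=> q hq; rewrite /inS; tauto.
- by move=> mm; do 7 (try case: mm => [|mm]); move=> /= Hm; rewrite ?H0 ?H1 ?H2 ?H3 ?H4 ?H5 ?H6; lia.
- by move=> mm; do 7 (try case: mm => [|mm]); move=> /= Hm Hw; rewrite ?H0 ?H1 ?H2 ?H3 ?H4 ?H5 ?H6; lia.
- by exists 3; split => //=; rewrite ?H0 ?H1 ?H2 ?H3 ?H4 ?H5 ?H6; lia.
- by move=> nn; do 7 (try case: nn => [|nn]).
- by rewrite /= /S1c; lia.
Qed.

Lemma T_G1m (p : pos) (k x1 x2 x3 x4 x5 x6 : nat) :
  p (idx (k+0)) = 0 -> p (idx (k+1)) = x1 -> p (idx (k+2)) = x2 -> p (idx (k+3)) = x3 -> p (idx (k+4)) = x4 -> p (idx (k+5)) = x5 -> p (idx (k+6)) = x6 -> 0 < x1 -> 0 < x2 -> 0 < x3 -> 0 < x4 -> 0 < x5 -> 0 < x6 ->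
  x6 + x1 <= x5 -> x6 + x1 <= x2 -> Good p.
Proof.
move=> H0 H1 H2 H3 H4 H5 H6 P1 P2 P3 P4 P5 P6 C0 C1.
apply: (@tmpl p k [:: (0); (x1); (x6 + x1); (0); (0); (x6 + x1); (x6)] [:: (0); (0); (x6 + x1); (x1); (0); (x6); (x6 + x1)] 2 4 true S1c) => //.
- by move=> q hq; rewrite /inS; tauto.
- by move=> mm; do 7 (try case: mm => [|mm]); move=> /= Hm; rewrite ?H0 ?H1 ?H2 ?H3 ?H4 ?H5 ?H6; lia.
- by move=> mm; do 7 (try case: mm => [|mm]); move=> /= Hm Hw; rewrite ?H0 ?H1 ?H2 ?H3 ?H4 ?H5 ?H6; lia.
- by exists 4; split => //=; rewrite ?H0 ?H1 ?H2 ?H3 ?H4 ?H5 ?H6; lia.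
- by move=> nn; do 7 (try case: nn => [|nn]).
- by rewrite /= /S1c; lia.
Qed.

Lemma T_G2 (p : pos) (k x1 x2 x3 x4 x5 x6 : nat) :
  p (idx (k+0)) = 0 -> p (idx (k+1)) = x1 -> p (idx (k+2)) = x2 -> p (idx (k+3)) = x3 -> p (idx (k+4)) = x4 -> p (idx (k+5)) = x5 -> p (idx (k+6)) = x6 -> 0 < x1 -> 0 < x2 -> 0 < x3 -> 0 < x4 -> 0 < x5 -> 0 < x6 ->
  x1 + x2 <= x6 -> x1 + x2 <= x3 + x4 -> Good p.
Proof.
move=> H0 H1 H2 H3 H4 H5 H6 P1 P2 P3 P4 P5 P6 C0 C1.
apply: (@tmpl p k [:: (0); (x1); (x2); ((x1 + x2) - minn x4 (x1 + x2)); (minn x4 (x1 + x2)); (0); (x1 + x2)] [:: (0); (minn x4 (x1 + x2)); ((x1 + x2) - minn x4 (x1 + x2)); (x2); (x1); (0); (x1 + x2)] 3 5 true S4c) => //.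
- by move=> q hq; rewrite /inS; tauto.
- by move=> mm; do 7 (try case: mm => [|mm]); move=> /= Hm; rewrite ?H0 ?H1 ?H2 ?H3 ?H4 ?H5 ?H6; lia.
- by move=> mm; do 7 (try case: mm => [|mm]); move=> /= Hm Hw; rewrite ?H0 ?H1 ?H2 ?H3 ?H4 ?H5 ?H6; lia.
- by exists 5; split => //=; rewrite ?H0 ?H1 ?H2 ?H3 ?H4 ?H5 ?H6; lia.
- by move=> nn; do 7 (try case: nn => [|nn]).
- by rewrite /= /S4c; lia.
Qed.

Lemma T_G2m (p : pos) (k x1 x2 x3 x4 x5 x6 : nat) :
  p (idx (k+0)) = 0 -> p (idx (k+1)) = x1 -> p (idx (k+2)) = x2 -> p (idx (k+3)) = x3 -> p (idx (k+4)) = x4 -> p (idx (k+5)) = x5 -> p (idx (k+6)) = x6 -> 0 < x1 -> 0 < x2 -> 0 < x3 -> 0 < x4 -> 0 < x5 -> 0 < x6 ->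
  x6 + x5 <= x1 -> x6 + x5 <= x4 + x3 -> Good p.
Proof.
move=> H0 H1 H2 H3 H4 H5 H6 P1 P2 P3 P4 P5 P6 C0 C1.
apply: (@tmpl p k [:: (0); (x6 + x5); (0); (minn x3 (x6 + x5)); ((x6 + x5) - minn x3 (x6 + x5)); (x5); (x6)] [:: (0); (minn x3 (x6 + x5)); ((x6 + x5) - minn x3 (x6 + x5)); (x5); (x6); (0); (x6 + x5)] 1 2 false S4c) => //.
- by move=> q hq; rewrite /inS; tauto.
- by move=> mm; do 7 (try case: mm => [|mm]); move=> /= Hm; rewrite ?H0 ?H1 ?H2 ?H3 ?H4 ?H5 ?H6; lia.
- by move=> mm; do 7 (try case: mm => [|mm]); move=> /= Hm Hw; rewrite ?H0 ?H1 ?H2 ?H3 ?H4 ?H5 ?H6; lia.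
- by exists 2; split => //=; rewrite ?H0 ?H1 ?H2 ?H3 ?H4 ?H5 ?H6; lia.
- by move=> nn; do 7 (try case: nn => [|nn]).
- by rewrite /= /S4c; lia.
Qed.

Lemma T_G3 (p : pos) (k x1 x2 x3 x4 x5 x6 : nat) :
  p (idx (k+0)) = 0 -> p (idx (k+1)) = x1 -> p (idx (k+2)) = x2 -> p (idx (k+3)) = x3 -> p (idx (k+4)) = x4 -> p (idx (k+5)) = x5 -> p (idx (k+6)) = x6 -> 0 < x1 -> 0 < x2 -> 0 < x3 -> 0 < x4 -> 0 < x5 -> 0 < x6 ->
  x3 + x4 <= x6 -> x2 < x3 + x4 -> x3 + x4 <= x1 + x2 -> Good p.
Proof.
move=> H0 H1 H2 H3 H4 H5 H6 P1 P2 P3 P4 P5 P6 C0 C1 C2.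
apply: (@tmpl p k [:: (0); ((x3 + x4) - x2); (x2); (x3); (x4); (0); (x3 + x4)] [:: (0); ((x3 + x4) - x2); (x2); (x3); (x4); (0); (x3 + x4)] 5 0 false S4c) => //.
- by move=> q hq; rewrite /inS; tauto.
- by move=> mm; do 7 (try case: mm => [|mm]); move=> /= Hm; rewrite ?H0 ?H1 ?H2 ?H3 ?H4 ?H5 ?H6; lia.
- by move=> mm; do 7 (try case: mm => [|mm]); move=> /= Hm Hw; rewrite ?H0 ?H1 ?H2 ?H3 ?H4 ?H5 ?H6; lia.
- by exists 5; split => //=; rewrite ?H0 ?H1 ?H2 ?H3 ?H4 ?H5 ?H6; lia.
- by move=> nn; do 7 (try case: nn => [|nn]).
- by rewrite /= /S4c; lia.
Qed.

Lemma T_G3m (p : pos) (k x1 x2 x3 x4 x5 x6 : nat) :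
  p (idx (k+0)) = 0 -> p (idx (k+1)) = x1 -> p (idx (k+2)) = x2 -> p (idx (k+3)) = x3 -> p (idx (k+4)) = x4 -> p (idx (k+5)) = x5 -> p (idx (k+6)) = x6 -> 0 < x1 -> 0 < x2 -> 0 < x3 -> 0 < x4 -> 0 < x5 -> 0 < x6 ->
  x4 + x3 <= x1 -> x5 < x4 + x3 -> x4 + x3 <= x6 + x5 -> Good p.
Proof.
move=> H0 H1 H2 H3 H4 H5 H6 P1 P2 P3 P4 P5 P6 C0 C1 C2.
apply: (@tmpl p k [:: (0); (x4 + x3); (0); (x3); (x4); (x5); ((x4 + x3) - x5)] [:: (0); ((x4 + x3) - x5); (x5); (x4); (x3); (0); (x4 + x3)] 6 0 true S4c) => //.
- by move=> q hq; rewrite /inS; tauto.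
- by move=> mm; do 7 (try case: mm => [|mm]); move=> /= Hm; rewrite ?H0 ?H1 ?H2 ?H3 ?H4 ?H5 ?H6; lia.
- by move=> mm; do 7 (try case: mm => [|mm]); move=> /= Hm Hw; rewrite ?H0 ?H1 ?H2 ?H3 ?H4 ?H5 ?H6; lia.
- by exists 2; split => //=; rewrite ?H0 ?H1 ?H2 ?H3 ?H4 ?H5 ?H6; lia.
- by move=> nn; do 7 (try case: nn => [|nn]).
- by rewrite /= /S4c; lia.
Qed.

Lemma T_G4 (p : pos) (k x1 x2 x3 x4 x5 x6 : nat) :
  p (idx (k+0)) = 0 -> p (idx (k+1)) = x1 -> p (idx (k+2)) = x2 -> p (idx (k+3)) = x3 -> p (idx (k+4)) = x4 -> p (idx (k+5)) = x5 -> p (idx (k+6)) = x6 -> 0 < x1 -> 0 < x2 -> 0 < x3 -> 0 < x4 -> 0 < x5 -> 0 < x6 ->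
  x6 <= x5 -> x5 <= x2 -> x5 <= x1 + x6 -> Good p.
Proof.
move=> H0 H1 H2 H3 H4 H5 H6 P1 P2 P3 P4 P5 P6 C0 C1 C2.
apply: (@tmpl p k [:: (0); (x5 - x6); (x5); (0); (0); (x5); (x6)] [:: (0); (0); (x5); (x5 - x6); (0); (x6); (x5)] 1 4 true S1c) => //.
- by move=> q hq; rewrite /inS; tauto.
- by move=> mm; do 7 (try case: mm => [|mm]); move=> /= Hm; rewrite ?H0 ?H1 ?H2 ?H3 ?H4 ?H5 ?H6; lia.
- by move=> mm; do 7 (try case: mm => [|mm]); move=> /= Hm Hw; rewrite ?H0 ?H1 ?H2 ?H3 ?H4 ?H5 ?H6; lia.
- by exists 3; split => //=; rewrite ?H0 ?H1 ?H2 ?H3 ?H4 ?H5 ?H6; lia.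
- by move=> nn; do 7 (try case: nn => [|nn]).
- by rewrite /= /S1c; lia.
Qed.

Lemma T_G4m (p : pos) (k x1 x2 x3 x4 x5 x6 : nat) :
  p (idx (k+0)) = 0 -> p (idx (k+1)) = x1 -> p (idx (k+2)) = x2 -> p (idx (k+3)) = x3 -> p (idx (k+4)) = x4 -> p (idx (k+5)) = x5 -> p (idx (k+6)) = x6 -> 0 < x1 -> 0 < x2 -> 0 < x3 -> 0 < x4 -> 0 < x5 -> 0 < x6 ->
  x1 <= x2 -> x2 <= x5 -> x2 <= x6 + x1 -> Good p.
Proof.
move=> H0 H1 H2 H3 H4 H5 H6 P1 P2 P3 P4 P5 P6 C0 C1 C2.
apply: (@tmpl p k [:: (0); (x1); (x2); (0); (0); (x2); (x2 - x1)] [:: (0); (0); (x2); (x2 - x1); (0); (x1); (x2)] 3 3 false S1c) => //.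
- by move=> q hq; rewrite /inS; tauto.
- by move=> mm; do 7 (try case: mm => [|mm]); move=> /= Hm; rewrite ?H0 ?H1 ?H2 ?H3 ?H4 ?H5 ?H6; lia.
- by move=> mm; do 7 (try case: mm => [|mm]); move=> /= Hm Hw; rewrite ?H0 ?H1 ?H2 ?H3 ?H4 ?H5 ?H6; lia.
- by exists 4; split => //=; rewrite ?H0 ?H1 ?H2 ?H3 ?H4 ?H5 ?H6; lia.
- by move=> nn; do 7 (try case: nn => [|nn]).
- by rewrite /= /S1c; lia.
Qed.

Lemma core (p : pos) (k x1 x2 x3 x4 x5 x6 : nat) :
  p (idx (k+0)) = 0 -> p (idx (k+1)) = x1 -> p (idx (k+2)) = x2 -> p (idx (k+3)) = x3 -> p (idx (k+4)) = x4 -> p (idx (k+5)) = x5 -> p (idx (k+6)) = x6 -> 0 < x1 -> 0 < x2 -> 0 < x3 -> 0 < x4 -> 0 < x5 -> 0 < x6 -> Good p.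
Proof.
move=> H0 H1 H2 H3 H4 H5 H6 P1 P2 P3 P4 P5 P6.
case: (leqP (x1) (x6)) => ?.
- case: (leqP (x6) (x1 + x2)) => ?.
  - case: (leqP (x6) (x3 + x4)) => ?.
    - case: (leqP (2) (x6)) => ?.
      - by apply: (@T_F2 _ _ _ _ _ _ _ _ H0 H1 H2 H3 H4 H5 H6 P1 P2 P3 P4 P5 P6); lia.
      - case: (leqP (x2) (x5)) => ?.
        - case: (leqP (x2) (2)) => ?.
          - by apply: (@T_G4m _ _ _ _ _ _ _ _ H0 H1 H2 H3 H4 H5 H6 P1 P2 P3 P4 P5 P6); lia.
          - by apply: (@T_G1 _ _ _ _ _ _ _ _ H0 H1 H2 H3 H4 H5 H6 P1 P2 P3 P4 P5 P6); lia.
        - case: (leqP (x5) (2)) => ?.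
          - by apply: (@T_G4 _ _ _ _ _ _ _ _ H0 H1 H2 H3 H4 H5 H6 P1 P2 P3 P4 P5 P6); lia.
          - by apply: (@T_G1 _ _ _ _ _ _ _ _ H0 H1 H2 H3 H4 H5 H6 P1 P2 P3 P4 P5 P6); lia.
    - case: (ltnP (x2) (x3 + x4)) => ?.
      - by apply: (@T_G3 _ _ _ _ _ _ _ _ H0 H1 H2 H3 H4 H5 H6 P1 P2 P3 P4 P5 P6); lia.
      - case: (leqP (x2) (x6)) => ?.
        - case: (leqP (x2) (x3 + x4 + x5)) => ?.
          - by apply: (@T_A2a _ _ _ _ _ _ _ _ H0 H1 H2 H3 H4 H5 H6 P1 P2 P3 P4 P5 P6); lia.
          - by apply: (@T_A3 _ _ _ _ _ _ _ _ H0 H1 H2 H3 H4 H5 H6 P1 P2 P3 P4 P5 P6); lia.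
        - case: (leqP (x5) (x6)) => ?.
          - case: (leqP (x6) (x3 + x4 + x5)) => ?.
            - by apply: (@T_A1a _ _ _ _ _ _ _ _ H0 H1 H2 H3 H4 H5 H6 P1 P2 P3 P4 P5 P6); lia.
            - by apply: (@T_A3 _ _ _ _ _ _ _ _ H0 H1 H2 H3 H4 H5 H6 P1 P2 P3 P4 P5 P6); lia.
          - case: (leqP (x1 + x6) (x2)) => ?.
            - case: (leqP (x1 + x6) (x5)) => ?.
              - by apply: (@T_G1 _ _ _ _ _ _ _ _ H0 H1 H2 H3 H4 H5 H6 P1 P2 P3 P4 P5 P6); lia.
              - case: (leqP (x5) (x2)) => ?.
                - by apply: (@T_G4 _ _ _ _ _ _ _ _ H0 H1 H2 H3 H4 H5 H6 P1 P2 P3 P4 P5 P6); lia.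
                - by apply: (@T_G4m _ _ _ _ _ _ _ _ H0 H1 H2 H3 H4 H5 H6 P1 P2 P3 P4 P5 P6); lia.
            - case: (leqP (x5) (x2)) => ?.
              - by apply: (@T_G4 _ _ _ _ _ _ _ _ H0 H1 H2 H3 H4 H5 H6 P1 P2 P3 P4 P5 P6); lia.
              - by apply: (@T_G4m _ _ _ _ _ _ _ _ H0 H1 H2 H3 H4 H5 H6 P1 P2 P3 P4 P5 P6); lia.
  - case: (leqP (x1 + x2) (x3 + x4)) => ?.
    - by apply: (@T_G2 _ _ _ _ _ _ _ _ H0 H1 H2 H3 H4 H5 H6 P1 P2 P3 P4 P5 P6); lia.
    - case: (leqP (x3 + x4) (x2)) => ?.
      - case: (leqP (x2) (x3 + x4 + x5)) => ?.
        - by apply: (@T_A2a _ _ _ _ _ _ _ _ H0 H1 H2 H3 H4 H5 H6 P1 P2 P3 P4 P5 P6); lia.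
        - by apply: (@T_A3 _ _ _ _ _ _ _ _ H0 H1 H2 H3 H4 H5 H6 P1 P2 P3 P4 P5 P6); lia.
      - by apply: (@T_G3 _ _ _ _ _ _ _ _ H0 H1 H2 H3 H4 H5 H6 P1 P2 P3 P4 P5 P6); lia.
- case: (leqP (x1) (x6 + x5)) => ?.
  - case: (leqP (x1) (x4 + x3)) => ?.
    - case: (leqP (2) (x1)) => ?.
      - by apply: (@T_F2m _ _ _ _ _ _ _ _ H0 H1 H2 H3 H4 H5 H6 P1 P2 P3 P4 P5 P6); lia.
      - case: (leqP (x5) (x2)) => ?.
        - case: (leqP (x5) (2)) => ?.
          - by apply: (@T_G4 _ _ _ _ _ _ _ _ H0 H1 H2 H3 H4 H5 H6 P1 P2 P3 P4 P5 P6); lia.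
          - by apply: (@T_G1 _ _ _ _ _ _ _ _ H0 H1 H2 H3 H4 H5 H6 P1 P2 P3 P4 P5 P6); lia.
        - case: (leqP (x2) (2)) => ?.
          - by apply: (@T_G4m _ _ _ _ _ _ _ _ H0 H1 H2 H3 H4 H5 H6 P1 P2 P3 P4 P5 P6); lia.
          - by apply: (@T_G1 _ _ _ _ _ _ _ _ H0 H1 H2 H3 H4 H5 H6 P1 P2 P3 P4 P5 P6); lia.
    - case: (ltnP (x5) (x4 + x3)) => ?.
      - by apply: (@T_G3m _ _ _ _ _ _ _ _ H0 H1 H2 H3 H4 H5 H6 P1 P2 P3 P4 P5 P6); lia.
      - case: (leqP (x5) (x1)) => ?.
        - case: (leqP (x5) (x4 + x3 + x2)) => ?.
          - by apply: (@T_A2am _ _ _ _ _ _ _ _ H0 H1 H2 H3 H4 H5 H6 P1 P2 P3 P4 P5 P6); lia.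
          - by apply: (@T_A3m _ _ _ _ _ _ _ _ H0 H1 H2 H3 H4 H5 H6 P1 P2 P3 P4 P5 P6); lia.
        - case: (leqP (x2) (x1)) => ?.
          - case: (leqP (x1) (x4 + x3 + x2)) => ?.
            - by apply: (@T_A1am _ _ _ _ _ _ _ _ H0 H1 H2 H3 H4 H5 H6 P1 P2 P3 P4 P5 P6); lia.
            - by apply: (@T_A3m _ _ _ _ _ _ _ _ H0 H1 H2 H3 H4 H5 H6 P1 P2 P3 P4 P5 P6); lia.
          - case: (leqP (x6 + x1) (x5)) => ?.
            - case: (leqP (x6 + x1) (x2)) => ?.
              - by apply: (@T_G1 _ _ _ _ _ _ _ _ H0 H1 H2 H3 H4 H5 H6 P1 P2 P3 P4 P5 P6); lia.
              - case: (leqP (x2) (x5)) => ?.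
                - by apply: (@T_G4m _ _ _ _ _ _ _ _ H0 H1 H2 H3 H4 H5 H6 P1 P2 P3 P4 P5 P6); lia.
                - by apply: (@T_G4 _ _ _ _ _ _ _ _ H0 H1 H2 H3 H4 H5 H6 P1 P2 P3 P4 P5 P6); lia.
            - case: (leqP (x2) (x5)) => ?.
              - by apply: (@T_G4m _ _ _ _ _ _ _ _ H0 H1 H2 H3 H4 H5 H6 P1 P2 P3 P4 P5 P6); lia.
              - by apply: (@T_G4 _ _ _ _ _ _ _ _ H0 H1 H2 H3 H4 H5 H6 P1 P2 P3 P4 P5 P6); lia.
  - case: (leqP (x6 + x5) (x4 + x3)) => ?.
    - by apply: (@T_G2m _ _ _ _ _ _ _ _ H0 H1 H2 H3 H4 H5 H6 P1 P2 P3 P4 P5 P6); lia.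
    - case: (leqP (x4 + x3) (x5)) => ?.
      - case: (leqP (x5) (x4 + x3 + x2)) => ?.
        - by apply: (@T_A2am _ _ _ _ _ _ _ _ H0 H1 H2 H3 H4 H5 H6 P1 P2 P3 P4 P5 P6); lia.
        - by apply: (@T_A3m _ _ _ _ _ _ _ _ H0 H1 H2 H3 H4 H5 H6 P1 P2 P3 P4 P5 P6); lia.
      - by apply: (@T_G3m _ _ _ _ _ _ _ _ H0 H1 H2 H3 H4 H5 H6 P1 P2 P3 P4 P5 P6); lia.
Qed.

Lemma idx_self (i : 'I_7) : idx (i + 0) = i.
Proof. apply: val_inj; rewrite /= idx_val addn0 modn_small //. Qed.

Theorem lemma3 (p : pos) :
  ~ inS p -> #|[pred i : 'I_7 | p i == 0]| = 1 ->
  exists p' : pos, legal_move p p' /\ inS p'.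
Proof.
move=> _ Hc; have [i Hi] := mem_card1 Hc.
have Hpos : forall n, 0 < n < 7 -> 0 < p (idx (i + n)).
  move=> n /andP [n0 n7]; rewrite lt0n; apply/negP => /eqP h.
  have := Hi (idx (i + n)); rewrite !inE /= h => /esym/eqP/(f_equal val).
  rewrite /= idx_val => h2; have := ltn_ord i; lia.
have H0 : p (idx (i + 0)) = 0.
  rewrite idx_self; have := Hi i; rewrite !inE /= => e; apply/eqP; rewrite e; by apply/eqP.
exact: (@core _ _ _ _ _ _ _ _ H0 erefl erefl erefl erefl erefl erefl (Hpos 1 erefl) (Hpos 2 erefl)
  (Hpos 3 erefl) (Hpos 4 erefl) (Hpos 5 erefl) (Hpos 6 erefl)).
Qed.
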